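(* Let $T$ be a ditree such that every source set of size at least $2$ and every sink set of size at least $2$ contains a leaf of $T$. Let $S\subseteq V(T)$ be the set of all sinks, all sources and all leaves of $T$. Then $S$ is a geodetic set of $T$ of minimum size.
   Context: All digraphs are finite, without loops or parallel arcs. The underlying undirected graph of a digraph is obtained by forgetting orientations and deleting parallel edges. A ditree is a digraph whose underlying undirected graph is a tree (it may contain $2$-cycles, i.e., pairs of opposite arcs $uv,vu$). A leaf is a vertex of degree $1$ in the underlying undirected graph. A source is a vertex with no in-neighbour; a sink is a vertex with no out-neighbour. For $S\subseteq V(D)$, $N^-(S)$ (resp. $N^+(S)$) is the set of vertices outside $S$ having an arc to (resp. from) some vertex of $S$. A source set is a maximal strongly connected component $S$ with $N^-(S)\setminus S=\emptyset$; a sink set is a maximal strongly connected component $S$ with $N^+(S)\setminus S=\emptyset$. For vertices $u,v$, $I(u,v)$ is the set of vertices on some shortest directed path from $u$ to $v$; for $S\subseteq V(D)$, $I(S)=\bigcup_{u,v\in S}(I(u,v)\cup I(v,u))$. A geodetic set is a set $S$ with $I(S)=V(D)$. *)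

(* Defs.v *)
From mathcomp Require Import all_boot.
Set Implicit Arguments. Unset Strict Implicit. Unset Printing Implicit Defensive.

(* A digraph on a finite vertex type V is an arc relation [a : rel V] with no
   loops; parallel arcs are impossible since arcs form a relation. *)
Section Digraphs.
Variables (V : finType) (a : rel V).

Definition loopless : Prop := forall x, ~~ a x x.

Definition und : rel V := fun x y => a x y || a y x.

(* undirected tree: connected and without (simple) cycles; in a simple
   undirected graph every cycle has at least 3 vertices *)
Definition und_connected : Prop := forall x y, connect und x y.
Definition und_acyclic : Prop := forall c : seq V, ucycle und c -> size c <= 2.
Definition ditree : Prop := [/\ loopless, und_connected & und_acyclic].

Definition leaf (x : V) : bool := #|[set y | und x y]| == 1.
Definition source (x : V) : bool := [forall y, ~~ a y x].
Definition sink (x : V) : bool := [forall y, ~~ a x y].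

Definition scc (x : V) : {set V} := [set y | connect a x y && connect a y x].

Definition source_set (S : {set V}) : Prop :=
  (exists x, S = scc x) /\ (forall u v, v \in S -> a u v -> u \in S).
Definition sink_set (S : {set V}) : Prop :=
  (exists x, S = scc x) /\ (forall u v, u \in S -> a u v -> v \in S).

(* directed walks from u: path a u p, ending at last u p, of length size p *)
Definition shortest_path (u v : V) (p : seq V) : Prop :=
  [/\ path a u p, last u p = v &
      forall q, path a u q -> last u q = v -> size p <= size q].

Definition interval (u v w : V) : Prop :=
  exists p, shortest_path u v p /\ w \in u :: p.

Definition geodetic (S : {set V}) : Prop :=
  forall w, exists u v, [/\ u \in S, v \in S & (interval u v w \/ interval v u w)].

End Digraphs.

(* Main.v *)
Require Import Defs.
From mathcomp Require Import all_boot.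
Set Implicit Arguments. Unset Strict Implicit. Unset Printing Implicit Defensive.

Definition Rw (V : finType) (a : rel V) (w : V) : rel V :=
  fun x y => und a x y && (x != w) && (y != w).
Definition br (V : finType) (a : rel V) (w z : V) : {set V} :=
  [set t | connect (Rw a w) z t].

Lemma connect_closed_pred (V : finType) (e : rel V) (P : pred V) x y :
  (forall u v, P u -> e u v -> P v) -> connect e x y -> P x -> P y.
Proof.
move=> cl /connectP [p pP ->]; elim: p x pP => [|z p IH] x //= /andP[exz pP] Px.
exact: IH pP (cl _ _ Px exz).
Qed.

Lemma und_sym (V : finType) (a : rel V) x y : und a x y = und a y x.
Proof. by rewrite /und orbC. Qed.

Lemma Rw_sym (V : finType) (a : rel V) w : symmetric (Rw a w).
Proof. by move=> x y; rewrite /Rw und_sym; case: (x != w); case: (y != w); rewrite ?andbT ?andbF. Qed.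

Lemma Rw_connect_sym (V : finType) (a : rel V) w x y :
  connect (Rw a w) x y = connect (Rw a w) y x.
Proof. exact: (sym_connect_sym (Rw_sym a w)). Qed.

Lemma und_neq (V : finType) (a : rel V) x y : loopless a -> und a x y -> x != y.
Proof.
move=> ll; apply: contraTneq => ->; by rewrite /und orbb (negbTE (ll y)).
Qed.

Lemma Rw_neq (V : finType) (a : rel V) w z t : z != w -> connect (Rw a w) z t -> t != w.
Proof.
move=> zw c; apply: (connect_closed_pred (P := fun t => t != w)) c zw.
by move=> u v _ /andP[_ ->].
Qed.

Lemma T0 (V : finType) (a : rel V) w x y :
  ditree a -> und a w x -> und a w y -> x != y -> connect (Rw a w) x y -> False.
Proof.
case=> ll _ ac wx wy xy /connectP [p pP].
have xw : x != w by rewrite eq_sym (und_neq ll wx).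
case: (shortenP pP) => p' p'P up' sub ey.
have allw : all (fun t => t != w) (x :: p').
  apply/allP => t; rewrite inE => /orP[/eqP -> // | tp].
  have tp2 := sub _ tp.
  have : connect (Rw a w) x t by apply: (path_connect pP); rewrite inE tp2 orbT.
  exact: Rw_neq xw.
have wn : w \notin x :: p'.
  apply/negP => wp; by move/allP: allw => /(_ _ wp); rewrite eqxx.
have uc : ucycle (und a) (w :: x :: p').
  rewrite /ucycle /= wx /=.
  rewrite rcons_path (sub_path _ p'P) /=; last by move=> u v /andP[/andP[]].
  rewrite und_sym -ey wy /=.
  by rewrite wn.
have := ac _ uc.
case: p' {p'P up' sub allw wn uc} ey => [|? ?] //= ey _.
by move: xy; rewrite ey /= eqxx.
Qed.

Definition SS (V : finType) (a : rel V) : {set V} :=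
  [set x | [|| sink a x, source a x | leaf a x]].
Definition restr (V : finType) (a : rel V) (Z : {set V}) : rel V :=
  fun x y => a x y && (x \in Z) && (y \in Z).

Lemma connect_subrel (V : finType) (e e' : rel V) x y :
  (forall u v, e u v -> e' u v) -> connect e x y -> connect e' x y.
Proof.
move=> h /connectP [p pP ->]; apply/connectP; exists p => //.
exact: sub_path pP.
Qed.

Lemma connect_revE (V : finType) (a : rel V) x y :
  connect (fun u v => a v u) x y = connect a y x.
Proof.
have := connect_rev a x y; rewrite /= => <-.
by apply: eq_connect.
Qed.

Lemma br_neq (V : finType) (a : rel V) w z t :
  z != w -> t \in br a w z -> t != w.
Proof. by move=> zw; rewrite inE; apply: Rw_neq. Qed.

Lemma T2 (V : finType) (a : rel V) w z t u :
  ditree a -> und a w z -> t \in br a w z -> u \notin br a w z -> und a u t ->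
  u = w /\ t = z.
Proof.
move=> d wz tZ uZ ut.
have [ll _ _] := d.
have zw : z != w by rewrite eq_sym (und_neq ll wz) .
case: (eqVneq u w) => [eu|uw].
  subst u; split => //; case: (eqVneq t z) => // tz; exfalso.
  apply: (T0 d wz ut); first by rewrite eq_sym.
  by move: tZ; rewrite inE.
exfalso; move/negP: uZ; apply; rewrite inE.
apply: (connect_trans (y := t)); first by move: tZ; rewrite inE.
apply: connect1; rewrite /Rw und_sym ut uw andbT /=.
exact: br_neq tZ.
Qed.

Lemma restr_in_l (V : finType) (a : rel V) Z t s :
  connect (restr a Z) t s -> s \in Z -> t \in Z.
Proof.
move/connectP => [[|y p] /= pP ->] // _.
by move: pP => /andP[/andP[/andP[_ ->]]].
Qed.

Lemma restr_sub (V : finType) (a : rel V) Z x y :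
  connect (restr a Z) x y -> connect a x y.
Proof. by apply: connect_subrel => u v /andP[/andP[]]. Qed.

Lemma core (V : finType) (a : rel V) w z :
  ditree a ->
  (forall S : {set V}, source_set a S -> 2 <= #|S| -> exists2 x, x \in S & leaf a x) ->
  und a w z -> a z w ->
  (exists u, [/\ u \in SS a, u \in br a w z & connect a u w]) \/
  (a w z /\ forall t, connect (restr a (br a w z)) t z -> connect (restr a (br a w z)) z t).
Proof.
move=> d hyp wz azw.
set Z := br a w z; set e := restr a Z.
have zZ : z \in Z by rewrite inE connect0.
pose F := [pred t | connect e t z].
have Fz : F z by rewrite /= connect0.
case: (arg_minnP (fun t => #|[set s | connect e s t]|) Fz) => c Fc cmin.
set C := [set s | connect e s c].
have cC : c \in C by rewrite inE connect0.
have SC : forall t, t \in C -> connect e c t.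
  move=> t; rewrite inE => tc.
  have Ft : F t by rewrite /= (connect_trans tc Fc).
  have sub : [set s | connect e s t] \subset C.
    by apply/subsetP => s; rewrite !inE => st; apply: connect_trans st tc.
  have : [set s | connect e s t] == C by rewrite eqEcard sub cmin.
  by move/eqP => E; move: cC; rewrite -E inE.
have cZ : c \in Z by apply: restr_in_l Fc zZ.
have CZ : forall t, t \in C -> t \in Z by move=> t; rewrite inE => tc; apply: restr_in_l tc cZ.
case: (boolP [forall u, forall t, ((t \in C) && a u t) ==> (u \in C)]) => [cl|ncl].
  left.
  have cl' : forall u t, t \in C -> a u t -> u \in C.
    by move=> u t tC aut; move/forallP: cl => /(_ u) /forallP /(_ t); rewrite tC aut.
  have anc : forall t, connect a t c -> t \in C.
    move=> t; rewrite -connect_revE => ct.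
    by apply: (connect_closed_pred (P := fun s => s \in C)) ct cC => u v uC avu; apply: cl' uC avu.
  have ssC : source_set a C.
    split; last by move=> u v vC auv; apply: cl' vC auv.
    exists c; apply/setP => t; rewrite [in RHS]inE; apply/idP/idP.
      move=> tC; rewrite (restr_sub (SC _ tC)) /=.
      by move: tC; rewrite inE => /restr_sub.
    by move/andP => [_ /anc].
  have [u uC uS] : exists2 u, u \in C & u \in SS a.
    case: (leqP 2 #|C|) => [h|h].
      by case: (hyp _ ssC h) => x xC lx; exists x => //; rewrite inE lx !orbT.
    exists c => //; rewrite inE; apply/orP; right; apply/orP; left.
    apply/forallP => y; apply/negP => ayc.
    have yC := cl' _ _ cC ayc.
    have : #|C| == 1 by rewrite eqn_leq -ltnS h card_gt0; apply/set0Pn; exists c.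
    case/cards1P => x Ex; move: yC cC; rewrite Ex !inE => yx cx.
    by case: d => ll _ _; move: ayc; rewrite (eqP yx) (eqP cx) (negbTE (ll x)).
  exists u; split => //; first exact: CZ.
  apply: (connect_trans (y := c)); first by move: uC; rewrite inE => /restr_sub.
  apply: (connect_trans (y := z)); first exact: restr_sub Fc.
  exact: connect1.
right.
have [u [t [tC aut uC]]] : exists u t, [/\ t \in C, a u t & u \notin C].
  move: ncl; rewrite negb_forall => /existsP [u]; rewrite negb_forall => /existsP [t].
  by rewrite negb_imply => /andP[/andP[tC aut] uC]; exists u, t.
have uZ : u \notin Z.
  apply/negP => uZ; move/negP: uC; apply; rewrite inE.
  apply: (connect_trans (y := t)); last by move: tC; rewrite inE.
  by apply: connect1; rewrite /e /restr aut uZ CZ.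
have [eu et] := T2 d wz (CZ _ tC) uZ (introT orP (or_introl aut)).
subst u t; split => // t' t'z.
apply: (connect_trans (y := c)); first by move: tC; rewrite inE.
apply: SC; rewrite inE; apply: connect_trans t'z _.
by move: tC; rewrite inE.
Qed.


Lemma T3 (V : finType) (a : rel V) w z :
  ditree a -> und a w z -> exists2 l, l \in br a w z & leaf a l.
Proof.
move=> d wz; have [ll _ _] := d.
pose P := fun pt : V * V => und a pt.1 pt.2 && (br a pt.1 pt.2 \subset br a w z).
have P0 : P (w, z) by rewrite /P wz subxx.
case: (arg_minnP (fun pt : V * V => #|br a pt.1 pt.2|) P0) => [[p t]] /andP[/= pt sub] cmin.
have tB : t \in br a p t by rewrite inE connect0.
exists t; first exact: (subsetP sub).
apply/cards1P; exists p; apply/setP => s; rewrite !inE.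
apply/idP/idP; last by move/eqP ->; rewrite und_sym.
move=> ts; apply/negPn/negP => sp.
have tp : t != p by rewrite eq_sym (und_neq ll pt).
have st : s != t by rewrite eq_sym (und_neq ll ts).
have subB : br a t s \subset br a p t.
  apply/subsetP => r; rewrite !inE => /connectP [q qP ->].
  have pq : p \notin s :: q.
    apply/negP => pin.
    apply: (T0 d ts (_ : und a t p) sp); first by rewrite und_sym.
    exact: path_connect qP _ pin.
  apply: (connect_trans (y := s)).
    by apply: connect1; rewrite /Rw ts tp sp.
  apply/connectP; exists q => //.
  apply: (sub_in_path (P := fun x => x != p)) qP.
    by move=> x y xp yp /andP[/andP[xy _] _]; rewrite /Rw xy; move: xp yp; rewrite /in_mem /= => -> ->.
  apply/allP => x xin; apply/negP => /eqP ex; subst x.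
  by rewrite xin in pq.
have prop : br a t s \proper br a p t.
  apply/properP; split => //; exists t => //.
  apply/negP => /(br_neq st); by rewrite eqxx.
have := cmin (t, s); rewrite /P /= ts (subset_trans subB sub) => /(_ isT).
by rewrite leqNgt (proper_card prop).
Qed.

Definition revr (V : finType) (a : rel V) : rel V := fun x y => a y x.

Lemma und_rev (V : finType) (a : rel V) x y : und (revr a) x y = und a x y.
Proof. by rewrite /und /revr orbC. Qed.

Lemma Rw_rev (V : finType) (a : rel V) w : Rw (revr a) w =2 Rw a w.
Proof. by move=> x y; rewrite /Rw und_rev. Qed.

Lemma br_rev (V : finType) (a : rel V) w z : br (revr a) w z = br a w z.
Proof. by apply/setP => t; rewrite !inE (eq_connect (Rw_rev a w)). Qed.

Lemma connect_revr (V : finType) (a : rel V) x y :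
  connect (revr a) x y = connect a y x.
Proof. exact: connect_revE. Qed.

Lemma restr_rev (V : finType) (a : rel V) Z x y :
  connect (restr (revr a) Z) x y = connect (restr a Z) y x.
Proof.
rewrite -connect_revE; apply: eq_connect => u v.
by rewrite /restr /revr andbAC.
Qed.

Lemma leaf_rev (V : finType) (a : rel V) x : leaf (revr a) x = leaf a x.
Proof.
have E : [set y | und (revr a) x y] = [set y | und a x y].
  by apply/setP => y; rewrite !inE und_rev.
by rewrite /leaf E.
Qed.

Lemma SS_rev (V : finType) (a : rel V) : SS (revr a) = SS a.
Proof.
apply/setP => x; rewrite !inE leaf_rev /sink /source /revr.
by case: [forall y, ~~ a y x]; case: [forall y, ~~ a x y].
Qed.

Lemma scc_rev (V : finType) (a : rel V) x : scc (revr a) x = scc a x.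
Proof. by apply/setP => y; rewrite !inE (connect_revr a x y) (connect_revr a y x) andbC. Qed.

Lemma ditree_rev (V : finType) (a : rel V) : ditree a -> ditree (revr a).
Proof.
case=> ll uc ac; split.
- by move=> x; exact: ll x.
- by move=> x y; rewrite (eq_connect (und_rev a)).
- move=> c; rewrite /ucycle (eq_cycle (und_rev a)); exact: ac.
Qed.

Lemma hyp_rev (V : finType) (a : rel V) :
  (forall S : {set V}, sink_set a S -> 2 <= #|S| -> exists2 x, x \in S & leaf a x) ->
  (forall S : {set V}, source_set (revr a) S -> 2 <= #|S| -> exists2 x, x \in S & leaf (revr a) x).
Proof.
move=> h S [[x ->] cl] s2.
have [y yS ly] : exists2 y, y \in scc a x & leaf a y.
  apply: h; last by rewrite -(scc_rev a x).
  split; first by exists x.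
  move=> u v uS auv; rewrite -(scc_rev a x); apply: (cl v u) => //.
  by rewrite scc_rev.
exists y; first by rewrite scc_rev.
by rewrite leaf_rev.
Qed.


Definition ingood (V : finType) (a : rel V) w z :=
  exists u, [/\ u \in SS a, u \in br a w z & connect a u w].
Definition outgood (V : finType) (a : rel V) w z :=
  exists u, [/\ u \in SS a, u \in br a w z & connect a w u].

Lemma core_rev (V : finType) (a : rel V) w z :
  ditree a ->
  (forall S : {set V}, sink_set a S -> 2 <= #|S| -> exists2 x, x \in S & leaf a x) ->
  und a w z -> a w z ->
  outgood a w z \/
  (a z w /\ forall t, connect (restr a (br a w z)) z t -> connect (restr a (br a w z)) t z).
Proof.
move=> d h wz awz.
have := core (ditree_rev d) (hyp_rev h) (_ : und (revr a) w z) (_ : revr a z w).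
rewrite und_rev => /(_ wz awz) [[u [uS uB uw]]|[azw SC]].
  left; exists u; split.
  - by rewrite -(SS_rev a).
  - by rewrite -(br_rev a w z).
  - by rewrite -(connect_revr a).
right; split => // t.
have := SC t; rewrite (br_rev a w z) (restr_rev a _ t z) (restr_rev a _ z t).
by [].
Qed.

Lemma final_leaf (V : finType) (a : rel V) w z :
  ditree a -> und a w z -> a z w ->
  (forall t, connect (restr a (br a w z)) t z -> connect (restr a (br a w z)) z t) ->
  (forall t, connect (restr a (br a w z)) z t -> connect (restr a (br a w z)) t z) ->
  ingood a w z.
Proof.
move=> d wz azw SCin SCout.
set Z := br a w z; set e := restr a Z.
have zZ : z \in Z by rewrite inE connect0.
have all : forall t, t \in Z -> connect e t z.
  move=> t; rewrite inE => zt.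
  apply: (connect_closed_pred (P := fun t => connect e t z)) zt (connect0 _ _).
  move=> s r sz sr.
  have sZ : s \in Z by apply: restr_in_l sz zZ.
  have rZ : r \in Z.
    by move: sZ; rewrite !inE => zs; apply: (connect_trans zs); apply: connect1.
  move: sr => /andP[/andP[usr _] _].
  case/orP: usr => [asr|ars].
    apply: SCout; apply: (connect_trans (SCin _ sz)); apply: connect1.
    by rewrite /e /restr asr sZ rZ.
  apply: (connect_trans _ sz); apply: connect1.
  by rewrite /e /restr ars sZ rZ.
have [l lZ ll] := T3 d wz.
exists l; split => //; first by rewrite inE ll !orbT.
apply: (connect_trans (y := z)); first exact: restr_sub (all _ lZ).
exact: connect1.
Qed.

Lemma Nlem (V : finType) (a : rel V) w z :
  ditree a ->
  (forall S : {set V}, source_set a S -> 2 <= #|S| -> exists2 x, x \in S & leaf a x) ->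
  (forall S : {set V}, sink_set a S -> 2 <= #|S| -> exists2 x, x \in S & leaf a x) ->
  und a w z -> ingood a w z \/ outgood a w z.
Proof.
move=> d hs hk wz; case/orP: (wz) => [awz|azw].
  case: (core_rev d hk wz awz) => [og|[azw SCout]]; first by right.
  case: (core d hs wz azw) => [ig|[_ SCin]]; first by left.
  by left; apply: final_leaf.
case: (core d hs wz azw) => [ig|[awz SCin]]; first by left.
case: (core_rev d hk wz awz) => [og|[_ SCout]]; first by right.
by left; apply: final_leaf.
Qed.

Lemma src_exists (V : finType) (a : rel V) c0 :
  ditree a ->
  (forall S : {set V}, source_set a S -> 2 <= #|S| -> exists2 x, x \in S & leaf a x) ->
  exists u, u \in SS a /\ connect a u c0.
Proof.
move=> d hyp.
pose F := [pred t | connect a t c0].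
have Fz : F c0 by rewrite /= connect0.
case: (arg_minnP (fun t => #|[set s | connect a s t]|) Fz) => c Fc cmin.
set C := [set s | connect a s c].
have cC : c \in C by rewrite inE connect0.
have SC : forall t, t \in C -> connect a c t.
  move=> t; rewrite inE => tc.
  have Ft : F t by rewrite /= (connect_trans tc Fc).
  have sub : [set s | connect a s t] \subset C.
    by apply/subsetP => s; rewrite !inE => st; apply: connect_trans st tc.
  have : [set s | connect a s t] == C by rewrite eqEcard sub cmin.
  by move/eqP => E; move: cC; rewrite -E inE.
have cl' : forall u t, t \in C -> a u t -> u \in C.
  by move=> u t; rewrite !inE => tc aut; apply: connect_trans (connect1 aut) tc.
have ssC : source_set a C.
  split; last by move=> u v vC auv; apply: cl' vC auv.
  exists c; apply/setP => t; rewrite [in RHS]inE; apply/idP/idP.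
    by move=> tC; rewrite (SC _ tC) /=; move: tC; rewrite inE.
  by move/andP => [_ tc]; rewrite inE.
have [u uC uS] : exists2 u, u \in C & u \in SS a.
  case: (leqP 2 #|C|) => [h|h].
    by case: (hyp _ ssC h) => x xC lx; exists x => //; rewrite inE lx !orbT.
  exists c => //; rewrite inE; apply/orP; right; apply/orP; left.
  apply/forallP => y; apply/negP => ayc.
  have yC := cl' _ _ cC ayc.
  have : #|C| == 1 by rewrite eqn_leq -ltnS h card_gt0; apply/set0Pn; exists c.
  case/cards1P => x Ex; move: yC cC; rewrite Ex !inE => yx cx.
  by case: d => ll _ _; move: ayc; rewrite (eqP yx) (eqP cx) (negbTE (ll x)).
exists u; split => //.
by apply: connect_trans Fc; move: uC; rewrite inE.
Qed.

Lemma walk_lem (V : finType) (a : rel V) w p u :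
  path a u p -> last u p = w -> u != w -> exists z, a z w /\ connect (Rw a w) z u.
Proof.
elim: p u => [|v p IH] u /=; first by move=> _ -> ; rewrite eqxx.
move=> /andP[auv pP] lw uw.
case: (eqVneq v w) => [evw|vw].
  by exists u; split; [rewrite -evw | exact: connect0].
have [z [azw zv]] := IH v pP lw vw.
exists z; split => //; apply: (connect_trans zv); apply: connect1.
by rewrite /Rw /und auv orbT vw uw.
Qed.

Lemma P4 (V : finType) (a : rel V) w :
  ditree a ->
  (forall S : {set V}, source_set a S -> 2 <= #|S| -> exists2 x, x \in S & leaf a x) ->
  w \notin SS a -> exists z, und a w z /\ ingood a w z.
Proof.
move=> d hs wS.
have [u [uS uw]] := src_exists w d hs.
have unw : u != w by apply: contraNneq wS => <-.
move/connectP: (uw) => [p pP lp].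
have [z [azw zu]] := walk_lem pP (esym lp) unw.
exists z; split; first by rewrite /und azw orbT.
by exists u; split => //; rewrite inE.
Qed.


Lemma shortest_exists (V : finType) (a : rel V) u v :
  connect a u v -> exists p, shortest_path a u v p.
Proof.
move/connectP => [p0 p0P e0].
pose P := fun n => [exists q : n.-tuple V, path a u q && (last u q == v)].
have exP : exists n, P n.
  by exists (size p0); apply/existsP; exists (in_tuple p0); rewrite p0P -e0 eqxx.
case: (ex_minnP exP) => n /existsP [q /andP[qP /eqP ql]] nmin.
exists q; split => // q' q'P q'l.
rewrite size_tuple; apply: nmin; apply/existsP; exists (in_tuple q').
by rewrite q'P q'l eqxx.
Qed.

Lemma Sep (V : finType) (a : rel V) w z1 z2 :
  ditree a -> und a w z1 -> und a w z2 -> z1 != z2 ->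
  ingood a w z1 -> outgood a w z2 ->
  exists u v, [/\ u \in SS a, v \in SS a & interval a u v w].
Proof.
move=> d w1 w2 z12 [u [uS uB uw]] [v [vS vB wv]].
exists u, v; split => //.
have [p [pP pl pmin]] := shortest_exists (connect_trans uw wv).
exists p; split => //; apply/negPn/negP => wn.
have uv : connect (Rw a w) u v.
  apply/connectP; exists p; last by rewrite pl.
  apply: (sub_in_path (P := fun x => x != w)) pP.
    move=> x y xw yw axy; move: xw yw; rewrite /in_mem /= => xw yw.
    by rewrite /Rw /und axy xw yw.
  apply/allP => x xin; apply/negP => /eqP ex; subst x.
  by rewrite xin in wn.
apply: (T0 d w1 w2 z12).
move: uB vB; rewrite !inE => z1u z2v.
apply: (connect_trans z1u); apply: (connect_trans uv).
by rewrite Rw_connect_sym.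
Qed.

Lemma in_pred (V : finType) (a : rel V) u p x :
  path a u p -> x \in p -> exists y, a y x.
Proof.
elim: p u => [|y p IH] u //= /andP[auy pP]; rewrite inE => /orP[/eqP ->|xp].
  by exists u.
exact: IH pP xp.
Qed.

Lemma in_succ (V : finType) (a : rel V) u p x :
  path a u p -> x \in u :: p -> x != last u p -> exists y, a x y.
Proof.
elim: p u => [|y p IH] u /=.
  by move=> _; rewrite inE => /eqP ->; rewrite eqxx.
move=> /andP[auy pP]; rewrite inE => /orP[/eqP ->|xp] xl.
  by exists y.
exact: IH pP xp xl.
Qed.

Lemma min_lem (V : finType) (a : rel V) u v p x :
  shortest_path a u v p -> x \in u :: p -> x \in SS a -> x = u \/ x = v.
Proof.
move=> [pP pl pmin] xin; rewrite inE => /orP[xsk|/orP[xsrc|xl]].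
- case: (eqVneq x v) => [->|xv]; first by right.
  have xl : x != last u p by rewrite pl.
  have [y axy] := in_succ pP xin xl.
  by move/forallP: xsk => /(_ y); rewrite axy.
- case: (eqVneq x u) => [->|xu]; first by left.
  have xp : x \in p by move: xin; rewrite inE (negbTE xu).
  have [y ayx] := in_pred pP xp.
  by move/forallP: xsrc => /(_ y); rewrite ayx.
case: (eqVneq x u) => [->|xu]; first by left.
case: (eqVneq x v) => [->|xv]; first by right.
exfalso.
have xp : x \in p by move: xin; rewrite inE (negbTE xu).
case/splitPr: xp pP pl pmin => p1 p2.
rewrite cat_path last_cat /= => /andP[p1P /andP[ax p2P]].
case: p2 p2P => [|y p3] /=.
  by move=> _ ex; move: xv; rewrite ex eqxx.
move=> /andP[axy p3P] l3 pmin.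
have ux : und a x (last u p1) by rewrite /und ax orbT.
have uy : und a x y by rewrite /und axy.
have ey : last u p1 = y.
  move/cards1P: xl => [z Ez].
  have : last u p1 \in [set y | und a x y] by rewrite inE.
  have : y \in [set y | und a x y] by rewrite inE.
  by rewrite Ez !inE => /eqP -> /eqP ->.
have := pmin (p1 ++ p3); rewrite cat_path p1P ey p3P last_cat ey l3 => /(_ isT erefl).
rewrite !size_cat /= => h.
have h2 : size p1 + size p3 < size p1 + (size p3).+2 by rewrite ltn_add2l.
by have := leq_ltn_trans h h2; rewrite ltnn.
Qed.


Lemma P5 (V : finType) (a : rel V) w :
  ditree a ->
  (forall S : {set V}, sink_set a S -> 2 <= #|S| -> exists2 x, x \in S & leaf a x) ->
  w \notin SS a -> exists z, und a w z /\ outgood a w z.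
Proof.
move=> d hk wS.
have wS' : w \notin SS (revr a) by rewrite SS_rev.
have [z [wz [u [uS uB uw]]]] := P4 (ditree_rev d) (hyp_rev hk) wS'.
exists z; split; first by rewrite -(und_rev a).
exists u; split.
- by rewrite -(SS_rev a).
- by rewrite -(br_rev a w z).
- by rewrite -(connect_revr a).
Qed.

Theorem lemma3 (V : finType) (a : rel V) :
  ditree a ->
  (forall S : {set V}, source_set a S -> 2 <= #|S| -> exists2 x, x \in S & leaf a x) ->
  (forall S : {set V}, sink_set a S -> 2 <= #|S| -> exists2 x, x \in S & leaf a x) ->
  let S := [set x | [|| sink a x, source a x | leaf a x]] in
  geodetic a S /\ (forall S' : {set V}, geodetic a S' -> #|S| <= #|S'|).
Proof.
move=> d hs hk S.
have SE : S = SS a by [].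
rewrite SE; split.
  move=> w; case: (boolP (w \in SS a)) => wS.
    exists w, w; split => //; left; exists [::]; split; last by rewrite inE.
    by split.
  have [z1 [w1 ig]] := P4 d hs wS.
  have [z2 [w2 og]] := P5 d hk wS.
  case: (eqVneq z1 z2) => [ez|z12].
    subst z2.
    have : ~~ ([set y | und a w y] \subset [set z1]).
      apply/negP => sub.
      have : leaf a w.
        rewrite /leaf; apply/cards1P; exists z1; apply/eqP; rewrite eqEsubset sub.
        by apply/subsetP => y; rewrite !inE => /eqP ->.
      by apply/negP; move: wS; apply: contra => lw; rewrite inE lw !orbT.
    case/subsetPn => z'; rewrite !inE => wz' z'z.
    case: (Nlem d hs hk wz') => [ig'|og'].
      have [u [v [uS vS iv]]] := Sep d wz' w1 z'z ig' og.
      by exists u, v; split => //; left.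
    have z1z' : z1 != z' by rewrite eq_sym.
    have [u [v [uS vS iv]]] := Sep d w1 wz' z1z' ig og'.
    by exists u, v; split => //; left.
  have [u [v [uS vS iv]]] := Sep d w1 w2 z12 ig og.
  by exists u, v; split => //; left.
move=> S' gS'; apply: subset_leq_card; apply/subsetP => x xS.
have [u [v [uS vS iv]]] := gS' x.
case: iv => [[p [sp xin]]|[p [sp xin]]].
  by case: (min_lem sp xin xS) => ->.
by case: (min_lem sp xin xS) => ->.
Qed.
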